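(* Let $G$ be a finite simple graph with a homogeneous set $H$, let $k = \chi(G[H])$, and let $K_k$ be a clique on $k$ vertices disjoint from $G$. Let $g(G,H,K_k)$ be the graph obtained from $G$ by deleting $H$, adding $K_k$, and joining every vertex of $V(G)\setminus H$ that has a neighbor in $H$ to all vertices of $K_k$. Then (i) $\chi(G) = \chi(g(G,H,K_k))$; and (ii) if $G$ contains no induced banner and no induced odd hole, then neither does $g(G,H,K_k)$.
   Context: $\chi$ denotes chromatic number. A set $H \subseteq V(G)$ is homogeneous if $2 \leq |H| < |V(G)|$ and every vertex of $V(G)\setminus H$ is adjacent either to all of $H$ or to none of $H$. A hole is a chordless cycle with at least four vertices; it is odd if it has an odd number of vertices. A banner is a hole on four vertices plus one vertex adjacent to exactly one vertex of that hole. *)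

(* Defs.v *)
(* Finite simple graphs are encoded as a relation e : rel T
   on a finType T; simplicity (symmetric, irreflexive) is a hypothesis of the
   theorem. *)
From mathcomp Require Import all_boot all_order.
Set Implicit Arguments. Unset Strict Implicit. Unset Printing Implicit Defensive.

Definition colorable (T : finType) (e : rel T) (n : nat) : bool :=
  [exists f : {ffun T -> 'I_n}, [forall x, forall y, e x y ==> (f x != f y)]].

Lemma colorable_card (T : finType) (e : rel T) (He : irreflexive e) :
  exists n, colorable e n.
Proof.
exists #|T|; apply/existsP; exists [ffun x => enum_rank x].
apply/forallP => x; apply/forallP => y; apply/implyP => exy.
rewrite !ffunE; apply: contraL exy => /eqP/enum_rank_inj ->; by rewrite He.
Qed.

(* chromatic number (for irreflexive e; 0 on the degenerate loop case) *)
Definition chi (T : finType) (e : rel T) : nat :=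
  match @idP [forall x, ~~ e x x] with
  | ReflectT h => ex_minn (colorable_card (fun x => negbTE (forallP h x)))
  | ReflectF _ => 0
  end.

Definition induced_on (T : finType) (e : rel T) (A : {set T}) : rel {x : T | x \in A} :=
  fun x y => e (val x) (val y).

Definition homogeneous (T : finType) (e : rel T) (H : {set T}) : Prop :=
  2 <= #|H| /\ #|H| < #|T| /\
  forall v, v \notin H ->
    (forall h, h \in H -> e v h) \/ (forall h, h \in H -> ~~ e v h).

Definition has_induced (T : finType) (e : rel T) (n : nat) (F : rel 'I_n) : Prop :=
  exists f : 'I_n -> T, injective f /\
    forall i j, i != j -> e (f i) (f j) = F i j.

Definition cycle_rel (n : nat) : rel 'I_n :=
  fun i j => (val j == (val i).+1 %% n) || (val i == (val j).+1 %% n).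

Definition has_odd_hole (T : finType) (e : rel T) : Prop :=
  exists n, 4 <= n /\ odd n /\ has_induced e (@cycle_rel n).

(* banner: 4-hole 0-1-2-3-0 plus vertex 4 adjacent only to 0 *)
Definition banner_rel : rel 'I_5 :=
  fun i j => let a := val i in let b := val j in
    ((a < 4) && (b < 4) && ((b == (a.+1 %% 4)) || (a == (b.+1 %% 4))))
    || ((a == 4) && (b == 0)) || ((a == 0) && (b == 4)).

Definition has_banner (T : finType) (e : rel T) : Prop :=
  has_induced e banner_rel.

Definition gvert (T : finType) (H : {set T}) (k : nat) : finType :=
  ({x : T | x \notin H} + 'I_k)%type.

Definition gGHK (T : finType) (e : rel T) (H : {set T}) (k : nat) : rel (gvert H k) :=
  fun u v =>
    match u, v with
    | inl x, inl y => e (val x) (val y)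
    | inl x, inr _ => [exists h in H, e (val x) h]
    | inr _, inl y => [exists h in H, e (val y) h]
    | inr i, inr j => i != j
    end.

Arguments induced_on {T} e A.
Arguments gGHK {T} e H k.

(* Main.v *)
Require Import Defs.
From mathcomp Require Import all_boot all_order zify.
Set Implicit Arguments. Unset Strict Implicit. Unset Printing Implicit Defensive.
Lemma succmod n i : i < n -> i.+1 %% n = (if i.+1 == n then 0 else i.+1).
Proof.
move=> lt; case: eqP => [->|ne]; first by rewrite modnn.
by rewrite modn_small //; rewrite ltn_neqAle lt andbT; apply/eqP.
Qed.
Lemma cyc_tri n (h4: 4<=n) (i j l : 'I_n) : i != j -> j != l -> i != l -> cycle_rel i j -> cycle_rel j l -> cycle_rel i l -> False.
Proof.
move: i j l => [i hi] [j hj] [l hl]; rewrite /cycle_rel /= -!val_eqE /= => ij jl il.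
rewrite !succmod //.
move=> /orP[/eqP e1|/eqP e1] /orP[/eqP e2|/eqP e2] /orP[/eqP e3|/eqP e3]; move: e1 e2 e3;
 repeat case: ifP; lia.
Qed.
Lemma cyc_pf n (h4: 4<=n) (i j : 'I_n) : i != j -> cycle_rel i j -> exists l, [&& l != i, l != j & cycle_rel i l || cycle_rel j l].
Proof.
have n0 : 0 < n by lia.
move=> ij /orP[/eqP e1|/eqP e1].
  exists (Ordinal (ltn_pmod j.+1 n0)); apply/and3P; split; rewrite -?val_eqE /=.
  - move: e1 ij; rewrite -val_eqE /=; move: i j => [i hi] [j hj] /=; rewrite !succmod //; repeat case: ifP; lia.
  - move: e1 ij; rewrite -val_eqE /=; move: i j => [i hi] [j hj] /=; rewrite !succmod //; repeat case: ifP; lia.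
  - by rewrite /cycle_rel /= eqxx orbT.
exists (Ordinal (ltn_pmod i.+1 n0)); apply/and3P; split; rewrite -?val_eqE /=.
  - move: e1 ij; rewrite -val_eqE /=; move: i j => [i hi] [j hj] /=; rewrite !succmod //; repeat case: ifP; lia.
  - move: e1 ij; rewrite -val_eqE /=; move: i j => [i hi] [j hj] /=; rewrite !succmod //; repeat case: ifP; lia.
  - by rewrite /cycle_rel /= eqxx.
Qed.
Lemma b1 (i j l : 'I_5) : i != j -> j != l -> i != l -> banner_rel i j -> banner_rel j l -> banner_rel i l -> False.
Proof. by case: i => [[|[|[|[|[|i]]]]] Hi]; case: j => [[|[|[|[|[|j]]]]] Hj]; case: l => [[|[|[|[|[|l]]]]] Hl]. Qed.
Lemma b2 (i j : 'I_5) : i != j -> banner_rel i j -> exists l, [&& l != i, l != j & banner_rel i l || banner_rel j l].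
Proof. case: i => [[|[|[|[|[|i]]]]] Hi]; case: j => [[|[|[|[|[|j]]]]] Hj] => // _ _;
 first [by exists (@Ordinal 5 0 isT) | by exists (@Ordinal 5 1 isT) | by exists (@Ordinal 5 3 isT)]. Qed.

Lemma chiP (T : finType) (e : rel T) (He : irreflexive e) :
  colorable e (chi e) /\ forall n, colorable e n -> chi e <= n.
Proof.
have hb : [forall x, ~~ e x x] by apply/forallP => x; rewrite He.
rewrite /chi. destruct (@idP [forall x, ~~ e x x]) as [h|h].
  by case: ex_minnP.
by [].
Qed.

Lemma colorableP (T : finType) (e : rel T) n :
  reflect (exists f : T -> 'I_n, forall x y, e x y -> f x != f y) (colorable e n).
Proof.
apply: (iffP existsP) => [[f /forallP Hf]|[f Hf]].
  exists f => x y exy; move/forallP: (Hf x) => /(_ y); by rewrite exy.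
exists [ffun x => f x]; apply/forallP => x; apply/forallP => y; apply/implyP => exy.
by rewrite !ffunE Hf.
Qed.

Lemma irr_ind (T : finType) (e : rel T) (He : irreflexive e) (A : {set T}) : irreflexive (induced_on e A).
Proof. by move=> x; rewrite /induced_on He. Qed.

Lemma irr_g (T : finType) (e : rel T) (He : irreflexive e) (H : {set T}) k : irreflexive (gGHK e H k).
Proof. by case=> [x|i]; rewrite /gGHK ?He ?eqxx. Qed.

Definition homog (T : finType) (e : rel T) (H : {set T}) :=
  forall v, v \notin H -> (forall h, h \in H -> e v h) \/ (forall h, h \in H -> ~~ e v h).

Lemma nbr (T : finType) (e : rel T) (H : {set T}) (hom : homog e H) h0 (h0H : h0 \in H)
  x (xH : x \notin H) : [exists h in H, e x h] = e x h0.
Proof.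
apply/idP/idP => [/existsP [h /andP [hH exh]]|ex0].
  case: (hom x xH) => Hc; first exact: Hc.
  by move: (Hc h hH); rewrite exh.
by apply/existsP; exists h0; rewrite h0H.
Qed.

Lemma col_g (T : finType) (e : rel T) (e_irr : irreflexive e) (H : {set T})
  (hom : homog e H) (h0 : T) (h0H : h0 \in H) :
  colorable (gGHK e H (chi (induced_on e H))) (chi e).
Proof.
have [/colorableP [c Hc] _] := chiP e_irr.
set S := [set c h | h in H].
have cS : c h0 \in S by apply/imsetP; exists h0.
have kS : chi (induced_on e H) <= #|S|.
  have [_ Hmin] := chiP (irr_ind (A:=H) e_irr).
  apply: Hmin; apply/colorableP.
  exists (fun x => enum_rank_in cS (c (val x))) => x y exy.
  apply: contraNneq (Hc _ _ exy) => /(congr1 enum_val).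
  rewrite !enum_rankK_in; first by move->.
    by apply/imsetP; exists (val y) => //; exact: valP.
  by apply/imsetP; exists (val x) => //; exact: valP.
pose d (i : 'I_(chi (induced_on e H))) : 'I_(chi e) := enum_val (widen_ord kS i).
have dS i : d i \in S by apply: enum_valP.
have dinj : injective d.
  by move=> i j /enum_val_inj /(congr1 val) /= /val_inj.
have dH i : exists2 h, h \in H & d i = c h by apply/imsetP.
apply/colorableP.
exists (fun u => match u with inl x => c (val x) | inr i => d i end).
case=> [x|i] [y|j] /=.
- exact: Hc.
- move=> ex; have [h hH ->] := dH j; apply: Hc.
  by rewrite -(nbr hom hH (valP x)).
- move=> ey; have [h hH ->] := dH i; rewrite eq_sym; apply: Hc.
  by rewrite -(nbr hom hH (valP y)).
- by apply: contra_neq => /dinj.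
Qed.

Lemma col_e (T : finType) (e : rel T) (e_sym : symmetric e) (e_irr : irreflexive e) (H : {set T})
  (h0 : T) (h0H : h0 \in H) (n0 : T) (n0H : n0 \notin H) :
  colorable e (chi (gGHK e H (chi (induced_on e H)))).
Proof.
set k := chi (induced_on e H).
have [/colorableP [c Hc] _] := chiP (irr_g (H:=H) (k:=k) e_irr).
have [/colorableP [b Hb] _] := chiP (irr_ind (A:=H) e_irr).
pose xh : {x | x \in H} := exist _ h0 h0H.
pose xn : {x | x \notin H} := exist _ n0 n0H.
apply/colorableP.
exists (fun x => if x \in H then c (inr (b (insubd xh x))) else c (inl (insubd xn x))) => x y exy.
have kn z : z \notin H -> val (insubd xn z) = z by move=> hz; exact: (insubdK xn hz).
have kh z : z \in H -> val (insubd xh z) = z by move=> hz; exact: (insubdK xh hz).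
case: ifP => xH; case: ifP => yH.
- apply: Hc; rewrite /gGHK; apply: Hb; by rewrite /induced_on !kh.
- have eyx : e y x by rewrite e_sym.
  apply: Hc; rewrite /gGHK; apply/existsP; exists x; rewrite xH kn ?yH //=.
- apply: Hc; rewrite /gGHK; apply/existsP; exists y; rewrite yH kn ?xH //.
- apply: Hc; by rewrite /gGHK !kn ?xH ?yH.
Qed.

Lemma transfer (T : finType) (e : rel T) (e_sym : symmetric e) (H : {set T}) k
  (hom : homog e H) (h0 : T) (h0H : h0 \in H) n (F : rel 'I_n)
  (PF : forall i j, i != j -> F i j -> exists l, [&& l != i, l != j & F i l || F j l])
  (TF : forall i j l, i != j -> j != l -> i != l -> F i j -> F j l -> F i l -> False) :
  has_induced (gGHK e H k) F -> has_induced e F.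
Proof.
move=> [f [finj hf]].
have noTwo : forall i j a b, i != j -> f i = inr a -> f j = inr b -> False.
  move=> i j a b ij fi fj.
  have ab : a != b by apply: contra_neq ij => eab; apply: finj; rewrite fi fj eab.
  have Fij : F i j by rewrite -hf // fi fj /=.
  have [l /and3P [li lj Fl]] := PF i j ij Fij.
  have same : gGHK e H k (f i) (f l) = gGHK e H k (f j) (f l).
    rewrite fi fj; case fl: (f l) => [x|c] //=.
    have ca : c != a by apply: contra_neq li => eca; apply: finj; rewrite fl fi eca.
    have cb : c != b by apply: contra_neq lj => ecb; apply: finj; rewrite fl fj ecb.
    by rewrite [a == c]eq_sym [b == c]eq_sym ca cb.
  have il : i != l by rewrite eq_sym.
  have jl : j != l by rewrite eq_sym.
  case/orP: Fl => Fl.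
    apply: (TF i j l ij jl il Fij _ Fl).
    by rewrite -(hf j l jl) -same hf.
  apply: (TF i j l ij jl il Fij Fl).
  by rewrite -(hf i l il) same hf.
pose f' i := match f i with inl x => val x | inr _ => h0 end.
exists f'; split.
- move=> i j; rewrite /f'; case fi: (f i) => [x|a]; case fj: (f j) => [y|b].
  + move/val_inj => xy; apply: finj; by rewrite fi fj xy.
  + move=> xh; by move: (valP x); rewrite /= xh h0H.
  + move=> xh; by move: (valP y); rewrite /= -xh h0H.
  + move=> _; case: (eqVneq i j) => // ij; exfalso; exact: noTwo i j a b ij fi fj.
- move=> i j ij; rewrite -(hf i j ij) /f'; case fi: (f i) => [x|a]; case fj: (f j) => [y|b] //=.
  + by rewrite (nbr hom h0H (valP x)).
  + by rewrite e_sym (nbr hom h0H (valP y)).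
  + exfalso; exact: noTwo i j a b ij fi fj.
Qed.

Theorem mainTheorem6 (T : finType) (e : rel T)
  (e_sym : symmetric e) (e_irr : irreflexive e) (H : {set T})
  (hH : homogeneous e H) :
  let k := chi (induced_on e H) in
  chi e = chi (gGHK e H k) /\
  (~ has_banner e -> ~ has_odd_hole e ->
     ~ has_banner (gGHK e H k) /\ ~ has_odd_hole (gGHK e H k)).
Proof.
move=> k; case: hH => [H2 [HT hom]].
have [h0 h0H] : exists h0, h0 \in H.
  by apply/set0Pn; rewrite -card_gt0; apply: leq_trans H2.
have [n0 n0H] : exists n0, n0 \notin H.
  apply/existsP; rewrite -negb_forall; apply: contraTN HT => /forallP all.
  have -> : H = setT by apply/setP => x; rewrite inE all.
  by rewrite cardsT ltnn.
split.
  apply/eqP; rewrite eqn_leq; apply/andP; split.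
    apply: (chiP e_irr).2; exact: (col_e e_sym e_irr h0H n0H).
  apply: (chiP (irr_g (H:=H) (k:=k) e_irr)).2; exact: (col_g e_irr hom h0H).
move=> nb nh; split.
  move=> hb; apply: nb; apply: (transfer e_sym hom h0H _ _ hb).
  - exact: b2.
  - exact: b1.
move=> [n [n4 [nodd hi]]]; apply: nh; exists n; split => //; split => //.
apply: (transfer e_sym hom h0H _ _ hi).
- exact: cyc_pf.
- exact: cyc_tri.
Qed.
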